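(* Let $\tau$ be a type and let $X$ be a finite set of ordinals. There is a construction scheme over $X$ of type $\tau$ if and only if $|X|=m_k$ for some $k\in\omega$. Moreover, if there is a construction scheme over $X$ of type $\tau$, it is unique.
   Context: A type is a sequence $\tau=\{(m_k,n_{k+1},r_{k+1})\}_{k\in\omega}$ of natural numbers with $m_0=1$; $n_k\ge2$ for $k\ge1$; every $r\in\omega$ equals $r_k$ for infinitely many $k$; $m_k>r_{k+1}$; and $m_{k+1}=r_{k+1}+(m_k-r_{k+1})n_{k+1}$ for all $k$. For a set of ordinals $X$ and $\mathcal F\subseteq[X]^{<\omega}$, $\mathcal F_k$ is the set of elements of rank $k$ in the well-founded order $(\mathcal F,\subsetneq)$; $A\sqsubseteq B$ means $A\subseteq B$ and every element of $B$ below an element of $A$ is in $A$; $A<B$ means every element of $A$ is below every element of $B$. $\mathcal F$ is a construction scheme over $X$ of type $\tau$ if (1) every finite subset of $X$ lies in a member of $\mathcal F$; (2) $|F|=m_k$ for $F\in\mathcal F_k$; (3) $E\cap F\sqsubseteq E$ and $E\cap F\sqsubseteq F$ for $E,F\in\mathcal F_k$; (4) each $F\in\mathcal F_{k+1}$ is the union of uniquely determined $F_0,\dots,F_{n_{k+1}-1}\in\mathcal F_k$ forming a $\Delta$-system with root $R(F)$, $|R(F)|=r_{k+1}$, and $R(F)<F_0\setminus R(F)<\dots<F_{n_{k+1}-1}\setminus R(F)$. *)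

(* Defs.v *)
From HB Require Import structures.
From mathcomp Require Import all_boot all_order.
From mathcomp Require Import finmap.
Set Implicit Arguments. Unset Strict Implicit. Unset Printing Implicit Defensive.
Import Order.TTheory.

(* A type tau = {(m_k, n_{k+1}, r_{k+1})}_k, given by three sequences
   m n r : nat -> nat (n 0 and r 0 are unused). *)
Definition is_type (m n r : nat -> nat) : Prop :=
  [/\ m 0 = 1,
      (forall k, 1 <= k -> 2 <= n k),
      (forall x N, exists k, N < k /\ r k = x),
      (forall k, r k.+1 < m k) &
      (forall k, m k.+1 = r k.+1 + (m k - r k.+1) * n k.+1)].

Local Open Scope fset_scope.

Section CS.
Context {disp : Order.disp_t} {T : orderType disp}.

Definition set_lt (A B : {fset T}) : Prop :=
  forall a b, a \in A -> b \in B -> (a < b)%O.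

Definition init_seg (A B : {fset T}) : Prop :=
  A `<=` B /\ (forall b a, b \in B -> a \in A -> (b < a)%O -> b \in A).

(* Rank in the well-founded order (F, proper inclusion):
   rank A = sup { rank B + 1 : B in F, B proper subset of A }.
   The fuel #|A|.+1 suffices since proper subsets are strictly smaller. *)
Fixpoint rank_aux (F : {fset {fset T}}) (fuel : nat) (A : {fset T}) : nat :=
  match fuel with
  | 0 => 0
  | fuel'.+1 => \max_(B <- F | B `<` A) (rank_aux F fuel' B).+1
  end.

Definition rank (F : {fset {fset T}}) (A : {fset T}) : nat :=
  rank_aux F (#|` A|).+1 A.

Definition level (F : {fset {fset T}}) (k : nat) (A : {fset T}) : Prop :=
  A \in F /\ rank F A = k.

Definition decomposition (F : {fset {fset T}}) (k p rr : nat)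
    (A : {fset T}) (s : 'I_p -> {fset T}) : Prop :=
  exists R : {fset T},
    [/\ (forall i, level F k (s i)),
        A = \bigcup_(i <- enum (ordinal p)) s i,
        (forall i j, i != j -> s i `&` s j = R) /\ #|` R| = rr,
        (forall i, set_lt R (s i `\` R)) &
        (forall i j : 'I_p, (i < j)%N -> set_lt (s i `\` R) (s j `\` R))].

Definition construction_scheme (m n r : nat -> nat)
    (X : {fset T}) (F : {fset {fset T}}) : Prop :=
  [/\ (forall A, A \in F -> A `<=` X),
      (forall A, A `<=` X -> exists2 B, B \in F & A `<=` B),
      (forall k A, level F k A -> #|` A| = m k),
      (forall k E G, level F k E -> level F k G ->
          init_seg (E `&` G) E /\ init_seg (E `&` G) G) &
      (forall k A, level F k.+1 A ->
          exists s : 'I_(n k.+1) -> {fset T},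
            decomposition F k (r k.+1) A s /\
            (forall s' : 'I_(n k.+1) -> {fset T},
                decomposition F k (r k.+1) A s' -> forall i, s' i = s i))].

End CS.

(* Main.v *)
Require Import Defs.
From HB Require Import structures.
From mathcomp Require Import all_boot all_order.
From mathcomp Require Import finmap.
From mathcomp Require Import zify.
From Stdlib Require Import ClassicalEpsilon.
Set Implicit Arguments. Unset Strict Implicit. Unset Printing Implicit Defensive.
Import Order.TTheory.
Local Open Scope fset_scope.

Lemma type_mS m n r k : is_type m n r -> m k < m k.+1.
Proof.
move=> H; case: H => m0 n2 _ rm mS.
rewrite mS; have := rm k; have := n2 k.+1 isT; nia.
Qed.

Lemma type_mpos m n r k : is_type m n r -> 0 < m k.
Proof.
move=> H; elim: k => [|k IH]; first by case: H => ->.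
exact: ltn_trans IH (type_mS _ H).
Qed.

Lemma type_mlt m n r j j' : is_type m n r -> j < j' -> m j < m j'.
Proof.
move=> H; elim: j' => // j' IH; rewrite ltnS leq_eqVlt => /orP[/eqP->|/IH h].
  exact: type_mS H.
exact: ltn_trans h (type_mS _ H).
Qed.

Lemma type_mle m n r j j' : is_type m n r -> (m j <= m j') = (j <= j').
Proof.
move=> H; case: (leqP j j') => h.
  rewrite leq_eqVlt in h; case/orP: h => [/eqP e|h].
    by subst j'; rewrite leqnn.
  by rewrite ltnW // (type_mlt H h).
by apply/negbTE; rewrite -ltnNge (type_mlt H h).
Qed.

Lemma type_minj m n r j j' : is_type m n r -> m j = m j' -> j = j'.
Proof.
move=> H e; apply/eqP; rewrite eqn_leq -(type_mle _ _ H) -(type_mle j' j H) e; lia.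
Qed.

Lemma rank_aux_fuel disp (T : orderType disp) (F : {fset {fset T}}) f f' (A : {fset T}) :
  #|` A| < f -> #|` A| < f' -> rank_aux F f A = rank_aux F f' A.
Proof.
elim: f f' A => [|f IH] [|f'] A //= h h'.
apply: eq_bigr => B /fproper_ltn_card hB.
congr S; apply: IH.
all: apply: (leq_trans hB); by rewrite -ltnS.

Qed.

Lemma rank_eq disp (T : orderType disp) (F : {fset {fset T}}) (A : {fset T}) :
  rank F A = \max_(B <- F | B `<` A) (rank F B).+1.
Proof.
rewrite /rank /=; apply: eq_bigr => B /fproper_ltn_card hB; congr S.
rewrite (@rank_aux_fuel _ _ F #|` A| #|` B|.+1) //.
Qed.

Lemma init_uniq disp (T : orderType disp) (A R R' : {fset T}) :
  R `<=` A -> R' `<=` A ->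
  (forall x y, x \in R -> y \in A -> y \notin R -> (x < y)%O) ->
  (forall x y, x \in R' -> y \in A -> y \notin R' -> (x < y)%O) ->
  #|` R| = #|` R'| -> R = R'.
Proof.
move=> RA R'A HR HR' card.
case: (boolP (R' `<=` R)) => sub.
  by apply/eqP; rewrite eq_sym eqEfcard sub card leqnn.
have [y yR' yR] := fsubsetPn _ _ sub.
have sub2 : R `<=` R'.
  apply/fsubsetP => x xR; apply/negPn/negP => xR'.
  have h1 := HR x y xR (fsubsetP R'A y yR') yR.
  have h2 := HR' y x yR' (fsubsetP RA x xR) xR'.
  by move: (lt_trans h1 h2); rewrite ltxx.
by apply/eqP; rewrite eqEfcard sub2 card leqnn.
Qed.

Lemma bigcup_ordP disp (T : orderType disp) p (s : 'I_p -> {fset T}) (P : pred 'I_p) x :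
  reflect (exists2 i, P i & x \in s i) (x \in \bigcup_(i <- enum 'I_p | P i) s i).
Proof.
apply: (iffP (bigfcupP _ _ _ _)) => [[i /andP[_ Pi] xi]|[i Pi xi]]; exists i => //.
by rewrite mem_enum Pi.
Qed.

Lemma ord_other p (i : 'I_p) : 1 < p -> exists j : 'I_p, j != i.
Proof.
move=> hp.
have h0 : 0 < p by lia.
case: (eqVneq i (Ordinal h0)) => [->|ne]; last by exists (Ordinal h0); rewrite eq_sym.
by exists (Ordinal hp).
Qed.

Lemma R_sub_s disp (T : orderType disp) p (s : 'I_p -> {fset T}) R :
  1 < p -> (forall i j, i != j -> s i `&` s j = R) -> forall i, R `<=` s i.
Proof.
move=> hp hI i; have [j ne] := ord_other i hp.
by rewrite -(hI j i ne) fsubsetIr.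
Qed.

Lemma inR_of disp (T : orderType disp) p (s : 'I_p -> {fset T}) R i j x :
  (forall i j, i != j -> s i `&` s j = R) -> i != j -> x \in s i -> x \in s j -> x \in R.
Proof. by move=> hI ne xi xj; rewrite -(hI i j ne) in_fsetI xi xj. Qed.

Lemma prefix_init disp (T : orderType disp) p (s : 'I_p -> {fset T}) R (A : {fset T}) (i : 'I_p) :
  1 < p ->
  A = \bigcup_(l <- enum 'I_p) s l ->
  (forall i j, i != j -> s i `&` s j = R) ->
  (forall i, set_lt R (s i `\` R)) ->
  (forall i j : 'I_p, (i < j)%N -> set_lt (s i `\` R) (s j `\` R)) ->
  forall x y, x \in (\bigcup_(l <- enum 'I_p | (l < i)%N) s l) `|` s i ->
    y \in A -> y \notin (\bigcup_(l <- enum 'I_p | (l < i)%N) s l) `|` s i -> (x < y)%O.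
Proof.
move=> hp defA hI hR hord x y xQ yA yQ.
have Rs := R_sub_s hp hI.
move: yA; rewrite defA => /bigcup_ordP [l _ yl].
have il : (i < l)%N.
  rewrite ltnNge leq_eqVlt; apply/negP => /orP[/eqP e|c]; move: yQ; rewrite in_fsetU.
    by move: yl; rewrite (val_inj e) => ->; rewrite orbT.
  by case/norP => /negP[]; apply/bigcup_ordP; exists l.
have yR : y \notin R.
  apply/negP => yR; move: yQ; rewrite in_fsetU => /norP[_ /negP[]].
  exact: (fsubsetP (Rs i)).
have ylR : y \in s l `\` R by rewrite in_fsetD yR yl.
case: (boolP (x \in R)) => xR; first exact: hR xR ylR.
have [l' l'i xl'] : exists2 l' : 'I_p, (l' <= i)%N & x \in s l'.
  move: xQ; rewrite in_fsetU => /orP[/bigcup_ordP[l' l'i xl']|xi].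
    by exists l' => //; apply: ltnW.
  by exists i.
apply: (hord l' l) => //; first exact: leq_ltn_trans l'i il.
by rewrite in_fsetD xR xl'.
Qed.

Lemma decomp_det disp (T : orderType disp) (A : {fset T}) p
    (s s' : 'I_p -> {fset T}) R R' M :
  1 < p ->
  A = \bigcup_(i <- enum 'I_p) s i -> A = \bigcup_(i <- enum 'I_p) s' i ->
  (forall i j, i != j -> s i `&` s j = R) ->
  (forall i j, i != j -> s' i `&` s' j = R') ->
  #|` R| = #|` R'| ->
  (forall i, set_lt R (s i `\` R)) -> (forall i, set_lt R' (s' i `\` R')) ->
  (forall i j : 'I_p, (i < j)%N -> set_lt (s i `\` R) (s j `\` R)) ->
  (forall i j : 'I_p, (i < j)%N -> set_lt (s' i `\` R') (s' j `\` R')) ->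
  (forall i, #|` s i| = M) -> (forall i, #|` s' i| = M) ->
  forall i, s' i = s i.
Proof.
move=> hp defA defA' hI hI' cR hR hR' ho ho' cs cs'.
have Rs := R_sub_s hp hI; have Rs' := R_sub_s hp hI'.
have h0 : 0 < p by lia.
have sA : forall i, s i `<=` A.
  by move=> i; rewrite defA; apply/fsubsetP => x xi; apply/bigcup_ordP; exists i.
have sA' : forall i, s' i `<=` A.
  by move=> i; rewrite defA'; apply/fsubsetP => x xi; apply/bigcup_ordP; exists i.
have RR' : R = R'.
  apply: (@init_uniq _ _ A) => //.
  - exact: fsubset_trans (Rs (Ordinal h0)) (sA _).
  - exact: fsubset_trans (Rs' (Ordinal h0)) (sA' _).
  - move=> x y xR; rewrite defA => /bigcup_ordP[l _ yl] yR.
    by apply: (hR l x y xR); rewrite in_fsetD yR yl.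
  - move=> x y xR; rewrite defA' => /bigcup_ordP[l _ yl] yR.
    by apply: (hR' l x y xR); rewrite in_fsetD yR yl.
subst R'.
suff H : forall N (i : 'I_p), (i < N)%N -> s' i = s i.
  by move=> i; apply: (H i.+1).
elim=> [//|N IH] i; rewrite ltnS leq_eqVlt => /orP[/eqP iN|]; last exact: IH.
have prev : forall l : 'I_p, (l < i)%N -> s' l = s l by move=> l; rewrite iN; apply: IH.
set U := \bigcup_(l <- enum 'I_p | (l < i)%N) s l.
have UU : \bigcup_(l <- enum 'I_p | (l < i)%N) s' l = U.
  by apply: eq_bigr => l li; rewrite prev.
have Qi := prefix_init (i:=i) hp defA hI hR ho.
have Qi' := prefix_init (i:=i) hp defA' hI' hR' ho'.
rewrite UU in Qi'.
have UA : U `<=` A.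
  by apply/fsubsetP => x /bigcup_ordP[l _ xl]; apply: (fsubsetP (sA l)).
have QQ : U `|` s i = U `|` s' i.
  apply: (@init_uniq _ _ A).
  - by rewrite fsubUset UA sA.
  - by rewrite fsubUset UA sA'.
  - exact: Qi.
  - exact: Qi'.
  case: (posnP i) => [i0|ipos].
    have U0 : U = fset0.
      apply/fsetP => x; rewrite in_fset0; apply/negP => /bigcup_ordP[l].
      by rewrite i0.
    by rewrite U0 !fset0U cs cs'.
  have UI : forall t : 'I_p -> {fset T}, (forall l : 'I_p, (l < i)%N -> t l = s l) ->
      (forall i j, i != j -> t i `&` t j = R) -> U `&` t i = R.
    move=> t ht hIt; apply/fsetP => x; rewrite in_fsetI; apply/idP/idP.
      case/andP => /bigcup_ordP[l li xl] xi.
      apply: (@inR_of _ _ _ t R l i) => //; last by rewrite ht.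
      by rewrite neq_ltn li.
    move=> xR; rewrite (fsubsetP (R_sub_s hp hIt i) x xR) andbT.
    apply/bigcup_ordP; exists (Ordinal h0) => //.
    by rewrite -(ht (Ordinal h0) ipos); apply: (fsubsetP (R_sub_s hp hIt _)).
  have e1 := cardfsUI U (s i); have e2 := cardfsUI U (s' i).
  rewrite (UI s) // in e1; rewrite (UI s') // in e2.
  move: e1 e2; rewrite cs cs' => e1 e2; lia.
apply/eqP; rewrite eq_sym eqEfcard cs cs' leqnn andbT.
apply/fsubsetP => x xi.
case: (boolP (x \in R)) => xR; first exact: (fsubsetP (Rs' i) x xR).
have : x \in U `|` s' i by rewrite -QQ in_fsetU xi orbT.
rewrite in_fsetU => /orP[/bigcup_ordP[l li xl]|//].
case/negP: xR; apply: (@inR_of _ _ _ s R l i) => //.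
by rewrite neq_ltn li.
Qed.

Lemma cs_X disp (T : orderType disp) m n r (X : {fset T}) F :
  construction_scheme m n r X F -> X \in F.
Proof.
case=> h1 h2 _ _ _; have [B BF XB] := h2 X (fsubset_refl X).
have BX := h1 B BF.
suff -> : X = B by [].
by apply/eqP; rewrite eqEfsubset XB BX.
Qed.

Lemma cs_rankX disp (T : orderType disp) m n r (X : {fset T}) F :
  construction_scheme m n r X F -> #|` X| = m (rank F X).
Proof.
move=> H; have XF := cs_X H; case: H => _ _ h3 _ _.
exact: h3.
Qed.

Lemma cs_level_le disp (T : orderType disp) m n r (X : {fset T}) F j A :
  is_type m n r -> construction_scheme m n r X F -> level F j A -> j <= rank F X.
Proof.
move=> ty H lA; have e := cs_rankX H.
case: H => h1 _ h3 _ _.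
rewrite -(type_mle _ _ ty) -e -(h3 _ _ lA).
apply: fsubset_leq_card; apply: h1; by case: lA.
Qed.

Lemma type_n2 m n r k : is_type m n r -> 1 < n k.+1.
Proof. by case=> _ h _ _ _; apply: h. Qed.

Lemma cs_cover disp (T : orderType disp) m n r (X : {fset T}) F :
  is_type m n r -> construction_scheme m n r X F ->
  forall d, d <= rank F X -> forall x, x \in X ->
  exists2 A, level F (rank F X - d) A & x \in A.
Proof.
move=> ty H; elim=> [|d IH] hd x xX.
  by exists X => //; rewrite subn0; split => //; apply: cs_X H.
have [A lA xA] := IH (ltnW hd) x xX.
have e : rank F X - d = (rank F X - d.+1).+1 by lia.
rewrite e in lA.
case: H => _ _ _ _ h5.
have [s [[R [ls defA _ _ _]] _]] := h5 _ _ lA.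
move: xA; rewrite defA => /bigcup_ordP[i _ xi].
by exists (s i).
Qed.

Lemma seq_max disp (T : orderType disp) (s : seq T) :
  s != [::] -> exists2 e, e \in s & forall x, x \in s -> (x <= e)%O.
Proof.
elim: s => // a s IH _.
case: (eqVneq s [::]) => [->|ne].
  by exists a; rewrite ?inE // => x /[!inE] /eqP ->.
have [e es he] := IH ne.
case: (leP a e) => ae.
  by exists e; rewrite ?inE ?es ?orbT // => x /[!inE] /orP[/eqP->//|/he].
exists a; rewrite ?inE ?eqxx // => x /[!inE] /orP[/eqP->//|/he xe].
exact: le_trans xe (ltW ae).
Qed.

Lemma fset_max disp (T : orderType disp) (E : {fset T}) :
  0 < #|` E| -> exists2 e, e \in E & forall x, x \in E -> (x <= e)%O.
Proof.
move=> h; have ne : enum_fset E != [::].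
  by apply/eqP => e; move: h; rewrite e.
have [e es he] := seq_max ne.
by exists e => // x xE; apply: he.
Qed.

Lemma level_step disp (T : orderType disp) m n r (X : {fset T}) F G j :
  is_type m n r -> construction_scheme m n r X F -> construction_scheme m n r X G ->
  j < rank F X ->
  (forall A, level F j.+1 A -> level G j.+1 A) ->
  forall E, level F j E -> level G j E.
Proof.
move=> ty HF HG hj hAG E lE.
have cE : #|` E| = m j by case: HF => _ _ h3 _ _; apply: h3.
have cpos : 0 < #|` E| by rewrite cE (type_mpos _ ty).
have [e eE he] := fset_max cpos.
have eX : e \in X by case: HF => h1 _ _ _ _; apply: (fsubsetP (h1 E _)) => //; case: lE.
have dle : rank F X - j.+1 <= rank F X by lia.
have [A lA eA] := cs_cover ty HF dle eX.
have e1 : rank F X - (rank F X - j.+1) = j.+1 by lia.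
rewrite e1 in lA.
have HF' := HF; case: HF' => _ _ h3F h4F h5F.
have HG' := HG; case: HG' => _ _ h3G h4G h5G.
have [s [[R [ls defA [hI cR] hR ho]] _]] := h5F _ _ lA.
have [s' [[R' [ls' defA' [hI' cR'] hR' ho']] _]] := h5G _ _ (hAG _ lA).
move: (eA); rewrite defA => /bigcup_ordP[i _ ei].
have Esi : E = s i.
  have [_ hseg] := (h4F _ _ _ lE (ls i)).1.
  apply/eqP; rewrite eqEfcard cE (h3F _ _ (ls i)) leqnn andbT.
  apply/fsubsetP => b bE.
  have := he b bE; rewrite le_eqVlt => /orP[/eqP->//|be].
  have : b \in E `&` s i by apply: (hseg b e) => //; rewrite in_fsetI eE ei.
  by rewrite in_fsetI => /andP[].
have := decomp_det (type_n2 _ ty) defA defA' hI hI' (etrans cR (esym cR')) hR hR' ho ho'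
   (fun i => h3F _ _ (ls i)) (fun i => h3G _ _ (ls' i)) i.
by move=> e2; rewrite Esi -e2.
Qed.

Lemma cs_unique disp (T : orderType disp) m n r (X : {fset T}) F G :
  is_type m n r -> construction_scheme m n r X F -> construction_scheme m n r X G ->
  F = G.
Proof.
move=> ty HF HG.
have KK : rank G X = rank F X.
  by apply: (type_minj ty); rewrite -(cs_rankX HF) -(cs_rankX HG).
set K := rank F X.
have base : forall (H : {fset {fset T}}), construction_scheme m n r X H -> rank H X = K ->
    forall A, level H K A <-> A = X.
  move=> H HH KH A; split.
    move=> lA; have := lA; have HH' := HH; case: HH' => h1 _ h3 _ _ [AH _].
    apply/eqP; rewrite eqEfcard h1 //= (h3 _ _ lA).
    by rewrite (cs_rankX HH) KH.
  by move=> ->; split => //; apply: cs_X HH.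
have main : forall d, d <= K -> forall A, level F (K - d) A <-> level G (K - d) A.
  elim=> [|d IH] hd A.
    rewrite subn0; rewrite (base F HF erefl) (base G HG KK) //.
  have e : K - d = (K - d.+1).+1 by lia.
  have IH' := IH (ltnW hd); rewrite e in IH'.
  split.
    apply: (level_step ty HF HG); first by rewrite -/K; lia.
    by move=> B /IH'.
  apply: (level_step ty HG HF); first by rewrite KK -/K; lia.
  by move=> B /IH'.
apply/fsetP => A; apply/idP/idP => AF.
  have lA : level F (rank F A) A by [].
  have le := cs_level_le ty HF lA.
  have e : rank F A = K - (K - rank F A) by rewrite /K; lia.
  rewrite e in lA; have [] := (main (K - rank F A) (leq_subr _ _) A).1 lA => //.
have lA : level G (rank G A) A by [].
have le := cs_level_le ty HG lA.
have e : rank G A = K - (K - rank G A) by move: le; rewrite KK -/K; lia.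
rewrite e in lA; have [] := (main (K - rank G A) (leq_subr _ _) A).2 lA => //.
Qed.

Definition iota_map (r c i t : nat) : nat := if t < r then t else (t + i * c)%N.

Definition img (T : choiceType) (M : nat) (f : nat -> T) : {fset T} :=
  [fset f t | t in iota 0 M].

Lemma imgP (T : choiceType) M (f : nat -> T) x :
  reflect (exists2 t, t < M & x = f t) (x \in img M f).
Proof.
apply: (iffP (imfsetP _ _ _ _)) => [[t]|[t tM ->]].
  by rewrite /= mem_iota add0n => ? ->; exists t.
by exists t => //=; rewrite mem_iota add0n.
Qed.

Lemma img_in (T : choiceType) M (f : nat -> T) t : t < M -> f t \in img M f.
Proof. by move=> tM; apply/imgP; exists t. Qed.

Definition smono disp (T : orderType disp) (M : nat) (f : nat -> T) :=
  forall a b, a < b -> b < M -> (f a < f b)%O.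

Lemma smono_inj disp (T : orderType disp) M (f : nat -> T) a b :
  smono M f -> a < M -> b < M -> f a = f b -> a = b.
Proof.
move=> hf aM bM e; case: (ltngtP a b) => // c.
  by have := hf a b c bM; rewrite e ltxx.
by have := hf b a c aM; rewrite e ltxx.
Qed.

Lemma smono_lt disp (T : orderType disp) M (f : nat -> T) a b :
  smono M f -> a < M -> b < M -> (f a < f b)%O -> a < b.
Proof.
move=> hf aM bM h; case: (ltngtP a b) => // c.
  by have := hf b a c aM; rewrite lt_gtF.
by move: h; rewrite c ltxx.
Qed.

Lemma smono_le disp (T : orderType disp) M M' (f : nat -> T) :
  M' <= M -> smono M f -> smono M' f.
Proof. by move=> h hf a b ab bM; apply: hf => //; apply: leq_trans h. Qed.

Lemma card_img disp (T : orderType disp) M (f : nat -> T) :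
  smono M f -> #|` img M f| = M.
Proof.
move=> hf; rewrite /img card_in_imfset /=.
  by rewrite undup_id ?iota_uniq // size_iota.
move=> a b /=; rewrite !mem_iota !add0n => aM bM; exact: smono_inj hf aM bM.
Qed.

Definition bdec (P : Prop) : bool := if excluded_middle_informative P then true else false.

Lemma bdecP (P : Prop) : bdec P <-> P.
Proof. by rewrite /bdec; case: excluded_middle_informative. Qed.

Section Arith.
Local Open Scope nat_scope.

Lemma im_lt r c n i t : t < r + c -> i < n -> iota_map r c i t < r + c * n.
Proof. rewrite /iota_map; case: ifP => h1 h2 h3; nia. Qed.

Lemma im_mono r c i a b : a < b -> iota_map r c i a < iota_map r c i b.
Proof. rewrite /iota_map; case: ifP; case: ifP; lia. Qed.

Lemma im_small r c i a : a < r -> iota_map r c i a = a.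
Proof. by rewrite /iota_map => ->. Qed.

Lemma im_big r c i a : r <= a -> iota_map r c i a = a + i * c.
Proof. by rewrite /iota_map ltnNge => ->. Qed.

Lemma im_ord r c i i' a b : i < i' -> r <= a < r + c -> r <= b ->
  iota_map r c i a < iota_map r c i' b.
Proof.
move=> ii /andP[ra ac] rb; rewrite im_big // im_big //.
have : i.+1 * c <= i' * c by apply: leq_mul.
nia.
Qed.

Lemma im_inter r c i i' a b : i != i' -> a < r + c -> b < r + c ->
  iota_map r c i a = iota_map r c i' b -> a < r.
Proof.
move=> ne ac bc; case: (ltnP a r) => // ra.
case: (ltnP b r) => rb; first by rewrite im_big // im_small //; lia.
rewrite im_big // im_big // => e.
case: (ltngtP i i') ne => // [ii|ii] _.
  have : i.+1 * c <= i' * c by apply: leq_mul.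
  nia.
have : i'.+1 * c <= i * c by apply: leq_mul.
nia.
Qed.

Lemma im_cover r c n t : 0 < c -> 0 < n -> t < r + c * n ->
  exists i a, [/\ i < n, a < r + c & iota_map r c i a = t].
Proof.
move=> c0 n0 tl; case: (ltnP t r) => tr.
  by exists 0, t; rewrite im_small //; split => //; lia.
exists ((t - r) %/ c), (r + (t - r) %% c).
have h1 := divn_eq (t - r) c.
have h2 : (t - r) %% c < c by rewrite ltn_pmod.
split.
- rewrite ltn_divLR //; nia.
- lia.
- rewrite im_big; last by lia.
  lia.
Qed.

End Arith.

Inductive cm (T : Type) (m n r : nat -> nat) (k : nat) (g : nat -> T) :
    nat -> (nat -> T) -> Prop :=
| cm_top : cm m n r k g k g
| cm_child : forall j f i, j < k -> cm m n r k g j.+1 f -> i < n j.+1 ->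
    cm m n r k g j (fun t => f (iota_map (r j.+1) (m j - r j.+1) i t)).

Lemma type_arith m n r j : is_type m n r ->
  m j = (r j.+1 + (m j - r j.+1))%N /\
  m j.+1 = (r j.+1 + (m j - r j.+1) * n j.+1)%N /\ 0 < m j - r j.+1.
Proof. case=> _ _ _ h1 h2; have := h1 j; rewrite h2; lia. Qed.

Lemma cm_le (T : Type) m n r k (g : nat -> T) j f : cm m n r k g j f -> j <= k.
Proof. by elim=> // j' f' i jk _ _ _; apply: ltnW. Qed.

Lemma cm_top_inv (T : Type) m n r k (g : nat -> T) f : cm m n r k g k f -> f = g.
Proof. move=> H; inversion H => //; lia. Qed.

Lemma cm_inv (T : Type) m n r k (g : nat -> T) j f : j < k -> cm m n r k g j f ->
  exists f' i, [/\ cm m n r k g j.+1 f', i < n j.+1 &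
     f = fun t => f' (iota_map (r j.+1) (m j - r j.+1) i t)].
Proof.
move=> jk H; inversion H; first by subst; lia.
by exists f0, i.
Qed.

Lemma cm_mono disp (T : orderType disp) m n r k (g : nat -> T) (X : {fset T}) j f :
  is_type m n r -> smono (m k) g -> (forall t, t < m k -> g t \in X) ->
  cm m n r k g j f -> smono (m j) f /\ (forall t, t < m j -> f t \in X).
Proof.
move=> ty hg hX; elim=> // j' f' i jk _ [IHm IHx] ik.
have [e1 [e2 c0]] := type_arith j' ty.
have lt : forall t, t < m j' -> iota_map (r j'.+1) (m j' - r j'.+1) i t < m j'.+1.
  move=> t tm; rewrite e2; apply: im_lt => //; lia.
split.
  move=> a b ab bm; apply: IHm; last exact: lt.
  exact: im_mono.
by move=> t tm; apply: IHx; apply: lt.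
Qed.

Definition tinv (T : Type) (M : nat) (f f' : nat -> T) :=
  exists2 t0, t0 <= M & (forall t, t < t0 -> f t = f' t) /\
    (forall a b, a < M -> b < M -> f a = f' b -> a < t0).

Lemma dc_lemma (P : pred nat) M : (forall a b, a <= b -> P b -> P a) ->
  exists2 t0, t0 <= M & forall t, t < M -> P t = (t < t0).
Proof.
move=> hP; elim: M => [|M [t0 t0M IH]]; first by exists 0.
case: (boolP (P M)) => PM.
  have t0e : t0 = M.
    apply/eqP; rewrite eqn_leq t0M /=; case: (leqP M t0) => // lt.
    by have := IH t0 lt; rewrite ltnn (hP t0 M (ltnW lt) PM).
  exists M.+1 => // t tM; rewrite tM.
  rewrite ltnS leq_eqVlt in tM; case/orP: tM => [/eqP->//|tl].
  by rewrite IH // t0e tl.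
exists t0; first exact: leqW.
move=> t; rewrite ltnS leq_eqVlt => /orP[/eqP->|tl]; last exact: IH.
rewrite (negbTE PM); apply/esym/negbTE; rewrite -leqNgt.
by [].
Qed.

Lemma cm_tinv disp (T : orderType disp) m n r k (g : nat -> T) (X : {fset T}) :
  is_type m n r -> smono (m k) g -> (forall t, t < m k -> g t \in X) ->
  forall j f f', cm m n r k g j f -> cm m n r k g j f' -> tinv (m j) f f'.
Proof.
move=> ty hg hX.
suff H : forall d j f f', (j + d)%N = k ->
    cm m n r k g j f -> cm m n r k g j f' -> tinv (m j) f f'.
  move=> j f f' cf cf'; have := cm_le cf => jk; apply: (H (k - j)) => //; lia.
elim=> [|d IH] j f f' e cf cf'.
  rewrite addn0 in e; subst j.
  rewrite (cm_top_inv cf) (cm_top_inv cf').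
  by exists (m k) => //; split.
have jk : j < k by lia.
have [p [i [cp ip ->]]] := cm_inv jk cf.
have [p' [i' [cp' ip' ->]]] := cm_inv jk cf'.
have e' : (j.+1 + d)%N = k by rewrite addSn -addnS.
have [t0' t0'le [agr com]] := IH j.+1 p p' e' cp cp'.
have [mp _] := cm_mono ty hg hX cp.
have [mp' _] := cm_mono ty hg hX cp'.
have [e1 [e2 c0]] := type_arith j ty.
set rr := r j.+1 in e1 e2 c0 *; set c := (m j - rr)%N in e1 e2 c0 *.
have lt : forall i0 t, i0 < n j.+1 -> t < m j -> iota_map rr c i0 t < m j.+1.
  move=> i0 t i0n tm; rewrite e2; apply: im_lt => //; lia.
case: (eqVneq i i') => [<-|ne].
  have [t0 t0le hP] : exists2 t0, t0 <= m j & forall t, t < m j ->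
      (iota_map rr c i t < t0') = (t < t0).
    apply: (@dc_lemma (fun t => iota_map rr c i t < t0')) => a b ab /=.
    rewrite leq_eqVlt in ab; case/orP: ab => [/eqP->//|ab].
    by apply: ltn_trans; apply: im_mono.
  exists t0 => //; split.
    move=> t tt0; apply: agr.
    by rewrite hP //; apply: leq_trans tt0 t0le.
  move=> a b am bm e0.
  by rewrite -hP // (com _ _ (lt _ _ ip am) (lt _ _ ip bm) e0).
exists (minn rr t0'); first by rewrite geq_min; apply/orP; left; lia.
split.
  move=> t; rewrite leq_min => /andP[tr tt].
  by rewrite !im_small //; apply: agr.
move=> a b am bm e0.
have ha := com _ _ (lt _ _ ip am) (lt _ _ ip' bm) e0.
have e3 : p' (iota_map rr c i a) = p' (iota_map rr c i' b) by rewrite -(agr _ ha).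
have e4 := smono_inj mp' (lt _ _ ip am) (lt _ _ ip' bm) e3.
have ar : a < rr by apply: (im_inter ne _ _ e4); lia.
rewrite leq_min ar /=.
by move: ha; rewrite im_small.
Qed.

Definition Fam disp (T : orderType disp) m n r k (g : nat -> T) (X : {fset T}) :
  {fset {fset T}} :=
  [fset A in fpowerset X | bdec (exists j f, cm m n r k g j f /\ A = img (m j) f)].

Lemma memFam disp (T : orderType disp) m n r k (g : nat -> T) (X : {fset T}) A :
  is_type m n r -> smono (m k) g -> (forall t, t < m k -> g t \in X) ->
  A \in Fam m n r k g X <-> exists j f, cm m n r k g j f /\ A = img (m j) f.
Proof.
move=> ty hg hX; rewrite /Fam in_fset inE /=.
have -> : (A \in [eta mem_seq (fpowerset X)]) = (A \in fpowerset X) by [].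
rewrite fpowersetE; split.
  by case/andP => _ /bdecP.
move=> H; apply/andP; split; last exact/bdecP.
have [j [f [cf ->]]] := H.
have [_ fX] := cm_mono ty hg hX cf.
by apply/fsubsetP => x /imgP[t tm ->]; apply: fX.
Qed.

Lemma rank_Fam disp (T : orderType disp) m n r k (g : nat -> T) (X : {fset T}) j f :
  is_type m n r -> smono (m k) g -> (forall t, t < m k -> g t \in X) ->
  cm m n r k g j f -> rank (Fam m n r k g X) (img (m j) f) = j.
Proof.
move=> ty hg hX; elim/ltn_ind: j f => j IH f cf.
have [mf _] := cm_mono ty hg hX cf.
rewrite rank_eq; apply/eqP; rewrite eqn_leq; apply/andP; split.
  apply/bigmax_leqP_seq => B /(memFam _ ty hg hX) [j' [f' [cf' ->]]] BA.
  have [mf' _] := cm_mono ty hg hX cf'.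
  have := fproper_ltn_card BA; rewrite !card_img // => lt.
  have jj : j' < j by rewrite ltnNge -(type_mle _ _ ty) -ltnNge.
  by rewrite IH.
case: j IH f cf mf => // j0 IH f cf mf.
have j0k : j0 < k by have := cm_le cf.
have n0 : 0 < n j0.+1 by have := type_n2 j0 ty; lia.
have cf0 := cm_child j0k cf n0.
set f0 := (fun t => _) in cf0.
have [mf0 _] := cm_mono ty hg hX cf0.
have [e1 [e2 c0]] := type_arith j0 ty.
apply: (leq_trans _ (leq_bigmax_seq (img (m j0) f0) _ _)).
- by rewrite IH.
- by apply/(memFam _ ty hg hX); exists j0, f0.
rewrite fproperEcard !card_img // (type_mlt ty (ltnSn j0)) andbT.
apply/fsubsetP => x /imgP[t tm ->]; apply: img_in.
rewrite e2; apply: im_lt => //; lia.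
Qed.

Lemma level_Fam disp (T : orderType disp) m n r k (g : nat -> T) (X : {fset T}) j A :
  is_type m n r -> smono (m k) g -> (forall t, t < m k -> g t \in X) ->
  level (Fam m n r k g X) j A <-> exists f, cm m n r k g j f /\ A = img (m j) f.
Proof.
move=> ty hg hX; split.
  case=> /(memFam _ ty hg hX) [j' [f [cf ->]]].
  by rewrite (rank_Fam ty hg hX cf) => <-; exists f.
case=> f [cf ->]; split; last exact: (rank_Fam ty hg hX cf).
by apply/(memFam _ ty hg hX); exists j, f.
Qed.

Lemma init_from_tinv disp (T : orderType disp) M (f f' : nat -> T) :
  smono M f -> smono M f' -> tinv M f f' ->
  init_seg (img M f `&` img M f') (img M f) /\
  init_seg (img M f `&` img M f') (img M f').
Proof.
move=> mf mf' [t0 t0M [agr com]].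
split; split; rewrite ?fsubsetIl ?fsubsetIr //.
  move=> b a /imgP[tb tbM ->] /fsetIP[/imgP[ta taM ->] /imgP[tb' tb'M e]] lt.
  have ta0 := com _ _ taM tb'M e.
  have := smono_lt mf tbM taM lt => tba.
  have tb0 : tb < t0 by apply: ltn_trans ta0.
  rewrite in_fsetI img_in //=; rewrite agr //; exact: img_in.
move=> b a /imgP[tb tbM ->] /fsetIP[/imgP[ta taM ->] /imgP[tb' tb'M e]] lt.
have ta0 := com _ _ taM tb'M e.
move: lt; rewrite (agr _ ta0) => lt.
have := smono_lt mf' tbM taM lt => tba.
have tb0 : tb < t0 by apply: ltn_trans ta0.
rewrite in_fsetI img_in // andbT -(agr _ tb0); exact: img_in.
Qed.

Lemma card_Fam disp (T : orderType disp) m n r k (g : nat -> T) (X : {fset T}) j A :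
  is_type m n r -> smono (m k) g -> (forall t, t < m k -> g t \in X) ->
  level (Fam m n r k g X) j A -> #|` A| = m j.
Proof.
move=> ty hg hX /(level_Fam _ _ ty hg hX) [f [cf ->]].
have [mf _] := cm_mono ty hg hX cf.
exact: card_img.
Qed.

Lemma decomp_Fam disp (T : orderType disp) m n r k (g : nat -> T) (X : {fset T}) k' f :
  is_type m n r -> smono (m k) g -> (forall t, t < m k -> g t \in X) ->
  cm m n r k g k'.+1 f ->
  exists s : 'I_(n k'.+1) -> {fset T},
    decomposition (Fam m n r k g X) k' (r k'.+1) (img (m k'.+1) f) s /\
    (forall s' : 'I_(n k'.+1) -> {fset T},
       decomposition (Fam m n r k g X) k' (r k'.+1) (img (m k'.+1) f) s' ->
       forall i, s' i = s i).
Proof.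
move=> ty hg hX cf.
have [mf _] := cm_mono ty hg hX cf.
have [e1 [e2 c0]] := type_arith k' ty.
have n2 := type_n2 k' ty.
set rr := r k'.+1 in e1 e2 c0 *; set c := (m k' - rr)%N in e1 e2 c0 *.
have k'k : k' < k by have := cm_le cf.
have lt : forall i0 t, i0 < n k'.+1 -> t < m k' -> iota_map rr c i0 t < m k'.+1.
  move=> i0 t i0n tm; rewrite e2; apply: im_lt => //; lia.
pose s := fun i : 'I_(n k'.+1) => img (m k') (fun t => f (iota_map rr c i t)).
have cs : forall i : 'I_(n k'.+1), cm m n r k g k' (fun t => f (iota_map rr c i t)).
  by move=> i; exact: (cm_child k'k cf (ltn_ord i)).
have ls : forall i, level (Fam m n r k g X) k' (s i).
  by move=> i; apply/(level_Fam _ _ ty hg hX); exists (fun t => f (iota_map rr c i t)).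
have hR : forall i j : 'I_(n k'.+1), i != j -> s i `&` s j = img rr f.
  move=> i j ne; apply/fsetP => x; apply/fsetIP/imgP.
    case=> /imgP[a am ->] /imgP[b bm e].
    have e' := smono_inj mf (lt _ _ (ltn_ord i) am) (lt _ _ (ltn_ord j) bm) e.
    have ar : a < rr by apply: (im_inter ne _ _ e'); lia.
    by exists a; rewrite ?im_small.
  case=> a ar ->.
  have am : a < m k' by lia.
  by split; apply/imgP; exists a; rewrite ?im_small.
have decs : decomposition (Fam m n r k g X) k' rr (img (m k'.+1) f) s.
  exists (img rr f); split => //.
  - apply/fsetP => x; apply/imgP/bigcup_ordP.
      case=> t tm ->.
      have [i [a [ilt am e]]] : exists i a, [/\ i < n k'.+1, a < rr + c & iota_map rr c i a = t].
        by apply: im_cover => //; [lia | rewrite -e2].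
      by exists (Ordinal ilt) => //; apply/imgP; exists a; rewrite ?e1 ?e.
    by case=> i _ /imgP[a am ->]; exists (iota_map rr c i a) => //; apply: lt.
  - split; first exact: hR.
    apply: card_img; apply: (smono_le _ mf); lia.
  - move=> i a b /imgP[ta tar ->] /[!in_fsetD] /andP[bR /imgP[tb tbm be]].
    rewrite be; apply: mf; last exact: lt.
    case: (ltnP tb rr) => tbr.
      by case/negP: bR; rewrite be im_small //; apply: img_in.
    rewrite im_big //; lia.
  - move=> i j ij a b /[!in_fsetD] /andP[aR /imgP[ta tam ae]] /andP[bR /imgP[tb tbm be]].
    have tar : rr <= ta.
      case: (ltnP ta rr) => // tar; case/negP: aR; rewrite ae im_small //; exact: img_in.
    have tbr : rr <= tb.
      case: (ltnP tb rr) => // tbr; case/negP: bR; rewrite be im_small //; exact: img_in.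
    rewrite ae be; apply: mf; last exact: lt.
    apply: im_ord => //; apply/andP; split => //; lia.
exists s; split => // s' [R' [ls' defA' [hI' cR'] hR' ho']].
have [R0 [_ defA [hI cR] hR0 ho]] := decs.
move=> i; apply: (decomp_det n2 defA defA' hI hI' (etrans cR (esym cR')) hR0 hR' ho ho'
   (fun i => card_Fam ty hg hX (ls i)) (fun i => card_Fam ty hg hX (ls' i))).
Qed.

Lemma Fam_scheme disp (T : orderType disp) m n r k (g : nat -> T) (X : {fset T}) :
  is_type m n r -> smono (m k) g -> (forall t, t < m k -> g t \in X) ->
  X = img (m k) g ->
  construction_scheme m n r X (Fam m n r k g X).
Proof.
move=> ty hg hX hXi; split.
- move=> A /(memFam _ ty hg hX) [j [f [cf ->]]].
  have [_ fX] := cm_mono ty hg hX cf.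
  by apply/fsubsetP => x /imgP[t tm ->]; apply: fX.
- move=> A AX; exists X => //.
  by apply/(memFam _ ty hg hX); exists k, g; split => //; exact: cm_top.
- by move=> j A lA; apply: (card_Fam ty hg hX lA).
- move=> j E G /(level_Fam _ _ ty hg hX) [f [cf ->]] /(level_Fam _ _ ty hg hX) [f' [cf' ->]].
  have [mf _] := cm_mono ty hg hX cf.
  have [mf' _] := cm_mono ty hg hX cf'.
  exact: init_from_tinv mf mf' (cm_tinv ty hg hX cf cf').
- move=> j A /(level_Fam _ _ ty hg hX) [f [cf ->]].
  exact: decomp_Fam ty hg hX cf.
Qed.

Unset Implicit Arguments.

Theorem mainTheorem18 (disp : Order.disp_t) (T : orderType disp)
    (m n r : nat -> nat) (X : {fset T}) :
  is_type m n r ->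
  ((exists F : {fset {fset T}}, construction_scheme m n r X F) <->
     (exists k, #|` X| = m k)) /\
  (forall F G : {fset {fset T}},
     construction_scheme m n r X F -> construction_scheme m n r X G -> F = G).
Proof.
move=> ty; split; last by move=> F G HF HG; apply: cs_unique ty HF HG.
split; first by case=> F HF; exists (rank F X); apply: cs_rankX HF.
case=> k hk.
have pos : 0 < #|` X| by rewrite hk (type_mpos _ ty).
have [x0 _ _] := fset_max pos.
pose s := sort <=%O (enum_fset X).
have ss : size s = m k by rewrite size_sort.
pose g := fun t => nth x0 s t.
have hg : smono (m k) g.
  move=> a b ab bm.
  have srt : sorted <%O s by rewrite sort_lt_sorted fset_uniq.
  apply: (sorted_ltn_nth lt_trans x0 srt) => //; rewrite inE ss //.
  exact: ltn_trans ab bm.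
have hX : forall t, t < m k -> g t \in X.
  by move=> t tm; rewrite /g -(mem_sort <=%O) mem_nth // ss.
exists (Fam m n r k g X); apply: Fam_scheme => //.
apply/fsetP => x; apply/idP/imgP => [xX|[t tm ->]]; last exact: hX.
have xs : x \in s by rewrite mem_sort.
by exists (index x s); [rewrite -ss index_mem | rewrite /g nth_index].
Qed.
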